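(* Let $T$ be a type distribution on $\mathcal{S}\subseteq\mathbb{N}$, let $\mathcal{Q}_n$ be a monotone event, and let $\Lambda_n,\Lambda_n':\mathcal{S}\times\mathcal{S}\to\mathbb{N}$ satisfy $\Lambda_n(t,s)\le\Lambda_n'(t,s)$ for all $t,s\in\mathcal{S}$. Then: 1. if $\mathcal{Q}_n$ is increasing, $\mathbb{P}(\texttt{ARD}_n(T,\Lambda_n)\in\mathcal{Q}_n)\le\mathbb{P}(\texttt{ARD}_n(T,\Lambda_n')\in\mathcal{Q}_n)$; 2. if $\mathcal{Q}_n$ is decreasing, $\mathbb{P}(\texttt{ARD}_n(T,\Lambda_n)\in\mathcal{Q}_n)\ge\mathbb{P}(\texttt{ARD}_n(T,\Lambda_n')\in\mathcal{Q}_n)$.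
   Context: $\texttt{ARD}_n(T,\Lambda_n)$: vertex set $[n]$, types $T_v$ i.i.d. as $T$; with $V_t=\{v:T_v=t\}$, independently for each $(t,s)\in\mathcal{S}^2$ choose $\Lambda_n(t,s)$ arcs uniformly at random without replacement from $(V_t\times V_s)\setminus\{(v,v):v\in[n]\}$ (all of them if there are fewer). For marked digraphs, $G_1\subseteq G_2$ if vertices carry the same marks and arcs of $G_1$ are arcs of $G_2$; $\mathcal{Q}_n$ is increasing if $G_1\in\mathcal{Q}_n,G_1\subseteq G_2\Rightarrow G_2\in\mathcal{Q}_n$, decreasing if $G_2\in\mathcal{Q}_n,G_1\subseteq G_2\Rightarrow G_1\in\mathcal{Q}_n$, monotone if either. *)

(* Defs.v *)
From HB Require Import structures.
From mathcomp Require Import all_boot all_order all_algebra.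
From mathcomp Require Import all_classical all_reals.
From mathcomp Require Import ereal esum.
Set Implicit Arguments. Unset Strict Implicit. Unset Printing Implicit Defensive.
Import Order.TTheory GRing.Theory Num.Theory.
Local Open Scope ring_scope.

(* A marked digraph on vertex set [n] = 'I_n : a mark (type) for each vertex
   and a set of arcs.  An event is a boolean predicate on such pairs. *)
Definition event (n : nat) := {ffun 'I_n -> nat} -> {set ('I_n * 'I_n)} -> bool.

Definition loopless (n : nat) (A : {set ('I_n * 'I_n)}) : bool :=
  [forall v : 'I_n, (v, v) \notin A].

Definition increasing_event (n : nat) (Q : event n) : Prop :=
  forall (m : {ffun 'I_n -> nat}) (A B : {set ('I_n * 'I_n)}),
    loopless B -> A \subset B -> Q m A -> Q m B.

Definition decreasing_event (n : nat) (Q : event n) : Prop :=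
  forall (m : {ffun 'I_n -> nat}) (A B : {set ('I_n * 'I_n)}),
    loopless B -> A \subset B -> Q m B -> Q m A.

Definition type_distribution (R : realType) (S : set nat) (p : nat -> R) : Prop :=
  (forall t, 0 <= p t) /\ (forall t, ~ S t -> p t = 0) /\
  (\esum_(t in [set: nat]) (p t)%:E = 1%E).

Definition type_pairs (n : nat) (tau : {ffun 'I_n -> nat}) (t s : nat)
  : {set ('I_n * 'I_n)} :=
  [set e | (tau e.1 == t) && (tau e.2 == s) && (e.1 != e.2)].

(* The possible outcomes of the arc selection given the types: loopless arc sets
   containing exactly min(Lambda(t,s), |V_t x V_s \ diag|) arcs of each class.
   Choosing independently for each (t,s) a uniform subset of that size is the
   same as choosing the (disjoint) union uniformly among these arc sets. *)
Definition valid_arcs (n : nat) (tau : {ffun 'I_n -> nat}) (L : nat -> nat -> nat)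
  : {set {set ('I_n * 'I_n)}} :=
  [set A : {set ('I_n * 'I_n)} | loopless A &&
     [forall u : 'I_n, forall v : 'I_n,
        #|A :&: type_pairs tau (tau u) (tau v)|
          == minn (L (tau u) (tau v)) #|type_pairs tau (tau u) (tau v)|]].

(* P(ARD_n(T, L) \in Q): sum over type vectors tau of P(types = tau) times the
   conditional probability that the uniformly chosen arc set gives an element of Q. *)
Definition ARD_prob (R : realType) (n : nat) (p : nat -> R) (L : nat -> nat -> nat)
  (Q : event n) : \bar R :=
  \esum_(tau in [set: {ffun 'I_n -> nat}])
     ((\prod_(v : 'I_n) p (tau v)) *
      (#|[set A in valid_arcs tau L | Q tau A]|%:R / #|valid_arcs tau L|%:R))%:E.

(* Main.v *)
Require Import Defs.
From HB Require Import structures.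
From mathcomp Require Import all_boot all_order all_algebra.
From mathcomp Require Import all_classical all_reals.
From mathcomp Require Import ereal esum.
From mathcomp Require Import zify.
Import Order.TTheory GRing.Theory Num.Theory.
Set Implicit Arguments. Unset Strict Implicit. Unset Printing Implicit Defensive.

Section Comb.
Variables (n : nat) (tau : {ffun 'I_n -> nat}).
Local Notation C t s := (type_pairs tau t s).
Local Notation T := ('I_n * 'I_n)%type.

Definition Vk (k : nat -> nat -> nat) : {set {set T}} :=
  [set A : {set T} | loopless A && [forall u : 'I_n, forall v : 'I_n,
     #|A :&: C (tau u) (tau v)| == k (tau u) (tau v)]].

Lemma memC x t s : (x \in C t s) = [&& tau x.1 == t, tau x.2 == s & x.1 != x.2].
Proof. by rewrite inE andbA. Qed.

Lemma cardU1I (x : T) (A D : {set T}) :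
  #|(x |: A) :&: D| = ((x \in D) && (x \notin A)) + #|A :&: D|.
Proof.
case xD: (x \in D) => /=.
  have -> : (x |: A) :&: D = x |: (A :&: D).
    by apply/setP=> y; rewrite !inE; case: eqP => // ->; rewrite xD.
  by rewrite cardsU1 inE xD andbT.
have -> // : (x |: A) :&: D = A :&: D.
by apply/setP=> y; rewrite !inE; case: eqP => // ->; rewrite xD !andbF.
Qed.

Lemma cardD1I (x : T) (A D : {set T}) :
  #|A :&: D| = ((x \in A) && (x \in D)) + #|(A :\ x) :&: D|.
Proof.
have -> : (A :\ x) :&: D = (A :&: D) :\ x.
  by apply/setP=> y; rewrite !inE andbA.
by rewrite (cardsD1 x (A :&: D)) inE.
Qed.

Variables (u0 v0 : 'I_n) (k : nat -> nat -> nat).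
Let t0 := tau u0.
Let s0 := tau v0.
Definition kup := fun t s => if (t == t0) && (s == s0) then (k t s).+1 else k t s.

Lemma inC0 x u v : x \in C t0 s0 ->
  (x \in C (tau u) (tau v)) = (tau u == t0) && (tau v == s0).
Proof.
rewrite !memC => /and3P [/eqP h1 /eqP h2 ->]; rewrite h1 h2 andbT.
by rewrite (eq_sym t0) (eq_sym s0).
Qed.

Lemma add_mem A x : A \in Vk k -> x \in C t0 s0 :\: A -> x |: A \in Vk kup.
Proof.
rewrite inE => /andP [/forallP lA /forallP cA]; rewrite finset.in_setD => /andP [xA xC].
rewrite inE; apply/andP; split.
  apply/forallP => v; rewrite finset.in_setU1 negb_or lA andbT.
  apply/eqP => ev; move: xC; rewrite memC -ev /= eqxx.
  by rewrite !andbF.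
apply/forallP => u; apply/forallP => v.
rewrite cardU1I (inC0 _ _ xC) xA andbT /kup.
move/forallP: (cA u) => /(_ v) /eqP ->.
by case: (_ && _).
Qed.

Lemma del_mem B x : B \in Vk kup -> x \in B :&: C t0 s0 -> B :\ x \in Vk k.
Proof.
rewrite inE => /andP [/forallP lB /forallP cB]; rewrite finset.in_setI => /andP [xB xC].
rewrite inE; apply/andP; split.
  by apply/forallP => v; rewrite finset.in_setD1 negb_and lB orbT.
apply/forallP => u; apply/forallP => v.
move/forallP: (cB u) => /(_ v) /eqP.
rewrite (cardD1I x) (inC0 _ _ xC) xB /= /kup.
by case: (_ && _) => /= h; apply/eqP; move: h; rewrite ?add1n ?add0n // => -[].
Qed.

Hypothesis kc : k t0 s0 < #|C t0 s0|.

Lemma cardP (Q1 : pred {set T}) :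
  #|[set p : {set T} * T | (p.1 \in Vk k) && Q1 p.1 && (p.2 \in C t0 s0 :\: p.1)]|
  = #|[set A in Vk k | Q1 A]| * (#|C t0 s0| - k t0 s0).
Proof.
rewrite -sum1_card.
rewrite (eq_bigl (fun p : {set T} * T => ((p.1 \in Vk k) && Q1 p.1) && (p.2 \in C t0 s0 :\: p.1))); last by move=> p; rewrite inE.
rewrite -(pair_big_dep (fun A => (A \in Vk k) && Q1 A) (fun A x => x \in C t0 s0 :\: A) (fun _ _ => 1)) /=.
rewrite -sum_nat_const.
rewrite [in RHS](eq_bigl (fun A => (A \in Vk k) && Q1 A)); last by move=> A; rewrite inE.
apply: eq_bigr => A /andP [AV _].
rewrite sum1_card cardsD.
move: AV; rewrite inE => /andP [_ /forallP /(_ u0) /forallP /(_ v0) /eqP].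
by rewrite finset.setIC => ->.
Qed.

Lemma cardP' (Q2 : pred {set T}) :
  #|[set p : {set T} * T | (p.1 \in Vk kup) && Q2 p.1 && (p.2 \in p.1 :&: C t0 s0)]|
  = #|[set A in Vk kup | Q2 A]| * (k t0 s0).+1.
Proof.
rewrite -sum1_card.
rewrite (eq_bigl (fun p : {set T} * T => ((p.1 \in Vk kup) && Q2 p.1) && (p.2 \in p.1 :&: C t0 s0))); last by move=> p; rewrite inE.
rewrite -(pair_big_dep (fun A => (A \in Vk kup) && Q2 A) (fun A x => x \in A :&: C t0 s0) (fun _ _ => 1)) /=.
rewrite -sum_nat_const.
rewrite [in RHS](eq_bigl (fun A => (A \in Vk kup) && Q2 A)); last by move=> A; rewrite inE.
apply: eq_bigr => A /andP [AV _].
rewrite sum1_card.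
move: AV; rewrite inE => /andP [_ /forallP /(_ u0) /forallP /(_ v0) /eqP ->].
by rewrite /kup !eqxx.
Qed.

Lemma step_le (Q1 Q2 : pred {set T}) :
  (forall A x, A \in Vk k -> x \in C t0 s0 :\: A -> Q1 A -> Q2 (x |: A)) ->
  #|[set A in Vk k | Q1 A]| * (#|C t0 s0| - k t0 s0) <=
  #|[set A in Vk kup | Q2 A]| * (k t0 s0).+1.
Proof.
move=> HQ; rewrite -cardP -cardP'.
set P := [set p | _].
set f := fun p : {set T} * T => (p.2 |: p.1, p.2).
rewrite -(@card_in_imset _ _ f P).
  apply: subset_leq_card; apply/fintype.subsetP => q /imsetP [p].
  rewrite inE => /andP [/andP [pV pQ] pC] -> /=.
  rewrite inE /= add_mem // HQ //= !inE eqxx /=.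
  by move: pC; rewrite !inE => /andP [_ ->].
move=> [A x] [B y]; rewrite !inE /= => /andP [_ /andP [xA _]] /andP [_ /andP [yB _]].
move=> [e1 e2]; subst y.
by rewrite -(setU1K xA) e1 setU1K.
Qed.

Lemma step_ge (Q1 Q2 : pred {set T}) :
  (forall B x, B \in Vk kup -> x \in B :&: C t0 s0 -> Q2 B -> Q1 (B :\ x)) ->
  #|[set A in Vk kup | Q2 A]| * (k t0 s0).+1 <=
  #|[set A in Vk k | Q1 A]| * (#|C t0 s0| - k t0 s0).
Proof.
move=> HQ; rewrite -cardP -cardP'.
set P := [set p | _].
set f := fun p : {set T} * T => (p.1 :\ p.2, p.2).
rewrite -(@card_in_imset _ _ f P).
  apply: subset_leq_card; apply/fintype.subsetP => q /imsetP [p].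
  rewrite /P inE => /andP [/andP [pV pQ] pC] -> /=.
  rewrite inE /= del_mem // HQ //= !inE eqxx /=.
  by move: pC; rewrite !inE => /andP [_ ->].
move=> [A x] [B y]; rewrite inE => /andP [_ /=]; rewrite finset.in_setI => /andP [xA _].
rewrite inE => /andP [_ /=]; rewrite finset.in_setI => /andP [yB _].
move=> [e1 e2]; subst y.
by rewrite -(finset.setD1K xA) e1 finset.setD1K.
Qed.

End Comb.
Section Main.
Variables (n : nat) (tau : {ffun 'I_n -> nat}).
Local Notation C t s := (type_pairs tau t s).
Local Notation T := ('I_n * 'I_n)%type.

Lemma Vk_ext k k' : (forall u v, k (tau u) (tau v) = k' (tau u) (tau v)) ->
  Vk tau k = Vk tau k'.
Proof.
move=> h; apply/setP => A; rewrite !inE; congr (_ && _).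
apply: eq_forallb => u; apply: eq_forallb => v; by rewrite h.
Qed.

Lemma setT_pred (V : {set {set T}}) : [set A in V | predT A] = V.
Proof. by apply/setP => A; rewrite inE andbT. Qed.

Lemma main_ind (Q : event n) (k' : nat -> nat -> nat) :
  (forall u v, k' (tau u) (tau v) <= #|C (tau u) (tau v)|) ->
  forall k, (forall u v, k (tau u) (tau v) <= k' (tau u) (tau v)) ->
  0 < #|Vk tau k| ->
  0 < #|Vk tau k'| /\
  (increasing_event Q -> #|[set A in Vk tau k | Q tau A]| * #|Vk tau k'|
      <= #|[set A in Vk tau k' | Q tau A]| * #|Vk tau k|) /\
  (decreasing_event Q -> #|[set A in Vk tau k' | Q tau A]| * #|Vk tau k|
      <= #|[set A in Vk tau k | Q tau A]| * #|Vk tau k'|).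
Proof.
move=> hk'.
pose d k := \sum_(p : T) (k' (tau p.1) (tau p.2) - k (tau p.1) (tau p.2)).
suff H : forall N k, d k <= N -> (forall u v, k (tau u) (tau v) <= k' (tau u) (tau v)) ->
  0 < #|Vk tau k| ->
  0 < #|Vk tau k'| /\
  (increasing_event Q -> #|[set A in Vk tau k | Q tau A]| * #|Vk tau k'|
      <= #|[set A in Vk tau k' | Q tau A]| * #|Vk tau k|) /\
  (decreasing_event Q -> #|[set A in Vk tau k' | Q tau A]| * #|Vk tau k|
      <= #|[set A in Vk tau k | Q tau A]| * #|Vk tau k'|).
  by move=> k; apply: (H (d k)).
elim=> [|N IH] k hd hle hV;
  (case: (boolP [exists u, exists v, k (tau u) (tau v) < k' (tau u) (tau v)])
    => [/existsP [u0 /existsP [v0 lt0]] | hne]).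
- have : 0 < d k.
    rewrite /d (bigD1 (u0, v0)) //=; lia.
  lia.
- have -> : Vk tau k' = Vk tau k.
    apply: Vk_ext => u v; apply/eqP; rewrite eqn_leq hle andbT.
    move: hne; rewrite negb_exists => /forallP /(_ u); rewrite negb_exists.
    by move=> /forallP /(_ v); rewrite -leqNgt.
  by split.
- set kk := kup tau u0 v0 k.
  have kk0 : kk (tau u0) (tau v0) = (k (tau u0) (tau v0)).+1 by rewrite /kk /kup !eqxx.
  have kkge : forall t s, k t s <= kk t s by move=> t s; rewrite /kk /kup; case: ifP.
  have hle1 : forall u v, kk (tau u) (tau v) <= k' (tau u) (tau v).
    move=> u v; rewrite /kk /kup; case: ifP => [/andP [/eqP -> /eqP ->] | _] //.
  have hd1 : d kk <= N.
    have : d kk < d k.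
      rewrite /d (bigD1 (u0, v0)) //= [X in _ < X](bigD1 (u0, v0)) //= kk0.
      have : \sum_(p | p != (u0, v0)) (k' (tau p.1) (tau p.2) - kk (tau p.1) (tau p.2))
          <= \sum_(p | p != (u0, v0)) (k' (tau p.1) (tau p.2) - k (tau p.1) (tau p.2)).
        by apply: leq_sum => p _; rewrite leq_sub2l.
      move=> h; apply: (leq_ltn_trans (leq_add (leqnn _) h)); rewrite ltn_add2r; lia.
    lia.
  have kc : k (tau u0) (tau v0) < #|C (tau u0) (tau v0)|.
    exact: (leq_trans lt0 (hk' u0 v0)).
  have E : #|Vk tau k| * (#|C (tau u0) (tau v0)| - k (tau u0) (tau v0))
         = #|Vk tau kk| * (k (tau u0) (tau v0)).+1.
    apply/eqP; rewrite eqn_leq.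
    have := @step_le n tau u0 v0 k predT predT (fun _ _ _ _ _ => erefl).
    have := @step_ge n tau u0 v0 k predT predT (fun _ _ _ _ _ => erefl).
    by rewrite !setT_pred => -> ->.
  have hV1 : 0 < #|Vk tau kk|.
    have : 0 < #|Vk tau k| * (#|C (tau u0) (tau v0)| - k (tau u0) (tau v0)).
      rewrite muln_gt0 hV subn_gt0 kc //.
    rewrite E muln_gt0 => /andP [] //.
  have [hZ [IHi IHd]] := IH kk hd1 hle1 hV1.
  split => //; split.
  + move=> incQ.
    have lp : forall A x, A \in Vk tau k -> x \in C (tau u0) (tau v0) :\: A -> loopless (x |: A).
      by move=> A x AV xD; have := add_mem AV xD; rewrite inE => /andP [].
    have St := @step_le n tau u0 v0 k (Q tau) (Q tau)
      (fun A x AV xD QA => incQ tau A (x |: A) (lp A x AV xD) (finset.subsetUr _ _) QA).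
    have IHi' := IHi incQ.
    move: St IHi' E hV hV1 kc.
    set a := #|[set A in Vk tau k | Q tau A]|.
    set b := #|[set A in Vk tau kk | Q tau A]|.
    set c := #|[set A in Vk tau k' | Q tau A]|.
    set X := #|Vk tau k|. set Y := #|Vk tau kk|. set Z := #|Vk tau k'|.
    set kc0 := k _ _. set m := #|C _ _|.
    move=> h1 h2 h3 h4 h5 h6.
    have h7 : a * Y <= b * X.
      rewrite -(@leq_pmul2r kc0.+1) // -mulnA -h3; nia.
    rewrite -(@leq_pmul2r Y) //; nia.
  + move=> decQ.
    have lp : forall B, B \in Vk tau kk -> loopless B.
      by move=> B; rewrite inE => /andP [].
    have St := @step_ge n tau u0 v0 k (Q tau) (Q tau)
      (fun B x BV xD QB => decQ tau (B :\ x) B (lp B BV) (finset.subsetDl _ _) QB).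
    have IHd' := IHd decQ.
    move: St IHd' E hV hV1 kc.
    set a := #|[set A in Vk tau k | Q tau A]|.
    set b := #|[set A in Vk tau kk | Q tau A]|.
    set c := #|[set A in Vk tau k' | Q tau A]|.
    set X := #|Vk tau k|. set Y := #|Vk tau kk|. set Z := #|Vk tau k'|.
    set kc0 := k _ _. set m := #|C _ _|.
    move=> h1 h2 h3 h4 h5 h6.
    have h7 : c * X * (m - kc0) <= a * Z * (m - kc0).
      rewrite -mulnA h3; nia.
    by rewrite -(@leq_pmul2r (m - kc0)) ?subn_gt0.
- have -> : Vk tau k' = Vk tau k.
    apply: Vk_ext => u v; apply/eqP; rewrite eqn_leq hle andbT.
    move: hne; rewrite negb_exists => /forallP /(_ u); rewrite negb_exists.
    by move=> /forallP /(_ v); rewrite -leqNgt.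
  by split.
Qed.
End Main.
Unset Implicit Arguments.
Local Open Scope ring_scope.
Lemma va n (tau : {ffun 'I_n -> nat}) L :
  valid_arcs tau L = Vk tau (fun t s => minn (L t s) #|type_pairs tau t s|).
Proof. by []. Qed.

Lemma V0 n (tau : {ffun 'I_n -> nat}) : (0 < #|Vk tau (fun _ _ => 0%N)|)%N.
Proof.
apply/card_gt0P; exists (finset.set0 : {set _}); rewrite inE; apply/andP; split.
  by apply/forallP => v; rewrite finset.in_set0.
by apply/forallP => u; apply/forallP => v; rewrite finset.set0I cards0.
Qed.

Lemma frac_le (R : realType) (a b X Y : nat) : (0 < X)%N -> (0 < Y)%N ->
  (a * Y <= b * X)%N -> (a%:R / X%:R : R) <= b%:R / Y%:R.
Proof.
move=> hX hY h.
rewrite ler_pdivrMr ?ltr0n // mulrAC ler_pdivlMr ?ltr0n // -!natrM ler_nat.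
exact: h.
Qed.

Theorem lemma5 (R : realType) (n : nat) (S : set nat) (p : nat -> R)
  (Q : event n) (L L' : nat -> nat -> nat) :
  type_distribution S p ->
  (forall t s, S t -> S s -> (L t s <= L' t s)%N) ->
  (increasing_event Q -> (ARD_prob p L Q <= ARD_prob p L' Q)%E) /\
  (decreasing_event Q -> (ARD_prob p L' Q <= ARD_prob p L Q)%E).
Proof.
move=> [p0 [pS _]] hL.
have key : forall tau : {ffun 'I_n -> nat},
  (forall v, S (tau v)) ->
  let X := #|valid_arcs tau L| in let Y := #|valid_arcs tau L'| in
  let a := #|[set A in valid_arcs tau L | Q tau A]| in
  let b := #|[set A in valid_arcs tau L' | Q tau A]| in
  [/\ (0 < X)%N, (0 < Y)%N, (increasing_event Q -> a * Y <= b * X)%N &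
      (decreasing_event Q -> b * X <= a * Y)%N].
  move=> tau hS /=; rewrite !va.
  set kL := fun t s => _.
  set kL' := fun t s => _.
  have hm : forall k, (forall u v, k (tau u) (tau v) <= #|type_pairs tau (tau u) (tau v)|)%N ->
     (0 < #|Vk tau k|)%N.
    move=> k hk; have [] := @main_ind n tau Q k hk (fun _ _ => 0%N) (fun _ _ => leq0n _) (@V0 n tau).
    by [].
  have hX : (0 < #|Vk tau kL|)%N by apply: hm => u v; rewrite /kL geq_minr.
  have hY : (0 < #|Vk tau kL'|)%N by apply: hm => u v; rewrite /kL' geq_minr.
  have hle : forall u v, (kL (tau u) (tau v) <= kL' (tau u) (tau v))%N.
    by move=> u v; rewrite /kL /kL'; have := hL _ _ (hS u) (hS v); lia.
  have [_ [hi hd]] := @main_ind n tau Q kL' (fun u v => geq_minr _ _) kL hle hX.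
  by split.
have pr0 : forall tau : {ffun 'I_n -> nat}, 0 <= \prod_(v : 'I_n) p (tau v).
  by move=> tau; apply: prodr_ge0 => v _.
have prz : forall tau : {ffun 'I_n -> nat}, ~ (forall v, S (tau v)) -> \prod_(v : 'I_n) p (tau v) = 0.
  move=> tau /existsNP [v hv]; rewrite (bigD1 v) //= pS // mul0r //.
split => hQ; apply: le_esum => tau _; rewrite lee_fin.
  have [hS|hS] := pselect (forall v, S (tau v)); last by rewrite prz // !mul0r.
  have [hX hY hi hd] := key tau hS.
  by apply: ler_wpM2l => //; apply: frac_le => //; apply: hi.
have [hS|hS] := pselect (forall v, S (tau v)); last by rewrite prz // !mul0r.
have [hX hY hi hd] := key tau hS.
by apply: ler_wpM2l => //; apply: frac_le => //; apply: hd.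
Qed.
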